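(* Let $W:\mathbb{N}^\star\times\mathbb{N}^\star\to\mathbb{C}$ be such that $F\,\square_W\,G\in\mathbb{M}$ and $F\,\square_W\,G=G\,\square_W\,F$ for all $F,G\in\mathbb{M}$. Then there exists $E\in\mathbb{M}$ with $F\,\square_W\,E=E\,\square_W\,F=F$ for all $F\in\mathbb{M}$ if and only if $W(1,p^n)=1$ for every prime $p$ and every integer $n\ge0$; in that case $E=\delta_1$.
   Context: $\mathbb{M}$ is the set of functions $F:\mathbb{N}^\star\to\mathbb{C}$ with $F(1)=1$ and $F(ab)=F(a)F(b)$ whenever $\gcd(a,b)=1$. For a weight $W$, $(F\,\square_W\,G)(m)=\sum_{ab=m}F(a)G(b)W(a,b)$. $\delta_1$ is the function with $\delta_1(1)=1$ and $\delta_1(n)=0$ for $n\ge2$. *)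

(* Defs.v *)
(* The codomain C is modelled by an arbitrary
   numClosedFieldType (algebraically closed, characteristic 0, with
   conjugation), the MathComp abstraction of the complex numbers. *)
From HB Require Import structures.
From mathcomp Require Import all_boot all_order all_algebra.
Set Implicit Arguments. Unset Strict Implicit. Unset Printing Implicit Defensive.
Import Order.TTheory GRing.Theory Num.Theory.
Local Open Scope ring_scope.

(* Arithmetic functions N* -> C are functions nat -> C whose value at 0 is
   irrelevant (all conditions only look at positive arguments). *)

Definition isMult (C : numClosedFieldType) (F : nat -> C) : Prop :=
  F 1%N = 1 /\
  forall a b : nat, (0 < a)%N -> (0 < b)%N -> coprime a b ->
    F (a * b)%N = F a * F b.

Definition wconv (C : numClosedFieldType) (W : nat -> nat -> C)
  (F G : nat -> C) (m : nat) : C :=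
  \sum_(a <- divisors m) F a * G (m %/ a)%N * W a (m %/ a)%N.

Definition delta1 (C : numClosedFieldType) (n : nat) : C :=
  if n == 1%N then 1 else 0.

(* Main.v *)
Require Import Defs.
From HB Require Import structures.
From mathcomp Require Import all_boot all_order all_algebra.
Import Order.TTheory GRing.Theory Num.Theory.
Local Open Scope ring_scope.

Section Aux.
Variable C : numClosedFieldType.
Variable W : nat -> nat -> C.

Lemma div_pos {m a : nat} : (0 < m)%N -> a \in divisors m -> (0 < a)%N /\ (0 < m %/ a)%N.
Proof.
move=> m0 ha; rewrite -dvdn_divisors // in ha.
have a0 : (0 < a)%N by move: ha; case: a => //; rewrite dvd0n => /eqP E; rewrite E in m0.
by split => //; rewrite divn_gt0 // dvdn_leq.
Qed.

Lemma wconv_d1l (G : nat -> C) m : (0 < m)%N -> wconv W (@delta1 C) G m = G m * W 1%N m.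
Proof.
move=> m0; rewrite /wconv (bigD1_seq 1%N) ?divisors_uniq -?dvdn_divisors ?dvd1n //=.
rewrite big1 ?addr0 /delta1 /= ?divn1 ?mul1r //.
by move=> a /negbTE ->; rewrite !mul0r.
Qed.

Lemma wconv_d1r (F : nat -> C) m : (0 < m)%N -> wconv W F (@delta1 C) m = F m * W m 1%N.
Proof.
move=> m0; rewrite /wconv (bigD1_seq m) ?divisors_uniq -?dvdn_divisors ?dvdnn //=.
rewrite big1_seq ?addr0 /delta1 /= ?divnn ?m0 ?mulr1 //.
move=> a /andP[nam ha]; have [a0 _] := div_pos m0 ha.
rewrite -dvdn_divisors // in ha.
case: eqP; last by rewrite mulr0 mul0r.
move=> h; exfalso; move: nam.
by rewrite -[m](divnK ha) h mul1n eqxx.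
Qed.

Lemma wconv_ext (F F' G G' : nat -> C) m : (0 < m)%N ->
  (forall k, (0 < k)%N -> F k = F' k) -> (forall k, (0 < k)%N -> G k = G' k) ->
  wconv W F G m = wconv W F' G' m.
Proof.
move=> m0 hF hG; apply: eq_big_seq => a ha; have [a0 b0] := div_pos m0 ha.
by rewrite hF // hG.
Qed.

Lemma isMult_d1 : isMult (@delta1 C).
Proof.
split; first by rewrite /delta1.
by move=> a b _ _ _; rewrite /delta1 muln_eq1; case: (a == 1%N); case: (b == 1%N);
  rewrite ?mulr1 ?mulr0 ?mul0r.
Qed.

Lemma isMult_one : isMult (fun _ : nat => (1 : C)).
Proof. by split => // *; rewrite mulr1. Qed.

End Aux.

Theorem mainTheorem6 (C : numClosedFieldType) (W : nat -> nat -> C)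
  (hW : forall F G : nat -> C, isMult F -> isMult G ->
          isMult (wconv W F G) /\
          (forall m : nat, (0 < m)%N -> wconv W F G m = wconv W G F m)) :
  ((exists E : nat -> C, isMult E /\
      forall F : nat -> C, isMult F -> forall m : nat, (0 < m)%N ->
        wconv W F E m = F m /\ wconv W E F m = F m)
   <->
   (forall p n : nat, prime p -> W 1%N (p ^ n)%N = 1))
  /\
  (forall E : nat -> C, isMult E ->
     (forall F : nat -> C, isMult F -> forall m : nat, (0 < m)%N ->
        wconv W F E m = F m /\ wconv W E F m = F m) ->
     forall m : nat, (0 < m)%N -> E m = delta1 C m).
Proof.
have part2 : forall E : nat -> C, isMult E ->
     (forall F : nat -> C, isMult F -> forall m : nat, (0 < m)%N ->
        wconv W F E m = F m /\ wconv W E F m = F m) ->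
     forall m : nat, (0 < m)%N -> E m = delta1 C m.
  move=> E [E1 _] hE; elim/ltn_ind => m IH m0.
  case: (eqVneq m 1%N) => [->|m1]; first by rewrite E1 /delta1.
  have dm : delta1 C m = 0 by rewrite /delta1 (negbTE m1).
  rewrite dm.
  have [h1 h2] := hE _ (isMult_d1 C) m m0.
  rewrite wconv_d1l // dm in h1; rewrite wconv_d1r // dm in h2.
  have [h3 _] := hE _ (isMult_one C) m m0.
  rewrite /wconv (bigD1_seq m) ?divisors_uniq -?dvdn_divisors ?dvdnn //= in h3.
  rewrite divnn m0 E1 mul1r mul1r big1_seq ?addr0 in h3; last first.
    move=> a /andP[nam ha]; have [a0 b0] := div_pos m0 ha.
    rewrite -dvdn_divisors // in ha.
    case: (eqVneq a 1%N) => [->|a1]; first by rewrite divn1 mul1r.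
    rewrite IH //; last by rewrite ltn_Pdiv // ltn_neqAle eq_sym a1 a0.
    rewrite /delta1; case: eqP; last by rewrite mulr0 mul0r.
    move=> h; exfalso; move: nam; by rewrite -[m](divnK ha) h mul1n eqxx.
  by move: h2; rewrite h3 mulr1.
split => //; split.
  move=> [E [hEm hE]] p n pp.
  have pn0 : (0 < p ^ n)%N by rewrite expn_gt0 prime_gt0.
  have [_ h] := hE _ (isMult_one C) _ pn0.
  rewrite (@wconv_ext C W E (delta1 C) _ (fun _ => 1)) // in h; last by apply: part2.
  by rewrite wconv_d1l // mul1r in h.
move=> hp.
have [[g1 gM] gC] := hW _ _ (isMult_d1 C) (isMult_one C).
have W1 : forall m, (0 < m)%N -> W 1%N m = 1.
  elim/ltn_ind => m IH m0.
  case: (eqVneq m 1%N) => [->|m1]; first by rewrite -(expn0 2) hp.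
  have m1' : (1 < m)%N by rewrite ltn_neqAle eq_sym m1 m0.
  have pp := pdiv_prime m1'.
  have [r cr def] := pfactor_coprime pp m0.
  have r0 : (0 < r)%N by move: m0; rewrite def muln_gt0 => /andP[].
  have k0 : (0 < logn (pdiv m) m)%N by rewrite logn_gt0 mem_primes pp m0 pdiv_dvd.
  have e1 : (1 < pdiv m ^ logn (pdiv m) m)%N by rewrite -(expn0 (pdiv m)) ltn_exp2l ?prime_gt1.
  have cr' : coprime r (pdiv m ^ logn (pdiv m) m) by rewrite coprime_sym coprimeXl.
  have := gM r (pdiv m ^ logn (pdiv m) m)%N r0 (ltnW e1) cr'.
  rewrite -def (@wconv_d1l C W _ _ m0) (@wconv_d1l C W _ _ r0) (@wconv_d1l C W _ _ (ltnW e1)).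
  rewrite !mul1r hp // mulr1 => ->.
  by apply: IH => //; rewrite [X in (_ < X)%N]def -{1}(muln1 r) ltn_mul2l r0.
exists (delta1 C); split; first exact: isMult_d1.
move=> F _ m m0.
have Wm1 : W m 1%N = 1.
  have := gC m m0; rewrite (@wconv_d1l C W _ _ m0) (@wconv_d1r C W _ _ m0) !mul1r => <-.
  exact: W1.
by rewrite (@wconv_d1l C W _ _ m0) (@wconv_d1r C W _ _ m0) W1 // Wm1 mulr1.
Qed.
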